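(* Let $\Omega>0$ denote the maximum absolute value of the stored quantities, let $C$ be the column index of the array of executed (visited) indicators in $X\in\mathbb{R}^{K\times d}$, and let $E$ be a target column index. Then there exists a single transformer layer that simulates the termination operation $X[1,E]\leftarrow(\text{no entry of }X[2{:},C]\text{ equals }0)$, i.e. it writes $1$ into $X[1,E]$ if none of the entries $X[2,C],\dots,X[K,C]$ is zero and $0$ otherwise.
   Context: Conventions: rows/columns indexed from $1$; $X[i,j]$ is the $(i,j)$ entry; $X[2{:},j]$ denotes the entries of column $j$ in rows $2,\dots,K$. $\phi(x)=\max\{x,0\}$ entrywise. Hardmax $\sigma$: row $i$ of $\sigma(\Phi)$ is $\frac{1}{|S_i|}\sum_{k\in S_i}e_k$, $S_i=\{k:\Phi_{ik}=\max_j\Phi_{ij}\}$. Positional encoding: $p_0=(0,1)^\top$, $p_i=R_{\widehat\delta}^\top p_{i-1}$ with $R_{\widehat\delta}=\begin{bmatrix}\cos\widehat\delta&-\sin\widehat\delta\\ \sin\widehat\delta&\cos\widehat\delta\end{bmatrix}$, $\widehat\delta$ the nearest representable approximation of the minimum increment angle. For a weighted hypergraph with incident matrix $A\in\mathbb{R}^{n_v\times n_e}$ ($A_{ij}=w(e_j)$ if vertex $v_i\in e_j$, else $0$) and $K\ge\max\{n_v,n_e\}+1$, the padded incident matrix $\widetilde A\in\mathbb{R}^{K\times K}$ has $\widetilde A_{i+1,j+1}=A_{ij}$, zeros elsewhere. A transformer layer on $X\in\mathbb{R}^{K\times d}$ is $f(X,\widetilde A)=f_{\mathrm{mlp}}(f_{\mathrm{attn}}(X,\widetilde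 A))$, $f_{\mathrm{attn}}(X,\widetilde A)=\sum_{i\in M_A}\psi^{(i)}(X,\widetilde A)+\sum_{i\in M_{A^\top}}\psi^{(i)}(X,\widetilde A^\top)+\sum_{i\in M}\psi^{(i)}(X,I_K)+X$, $\psi(X,B)=B\,\sigma(XW_QW_K^\top X^\top)XW_V$ ($W_Q,W_K\in\mathbb{R}^{d\times2}$, $W_V\in\mathbb{R}^{d\times d}$), $f_{\mathrm{mlp}}(X)=Z^{(4)}W^{(4)}+X$, $Z^{(1)}=X$, $Z^{(j+1)}=\phi(Z^{(j)}W^{(j)})$ ($j=1,2,3$). Storage convention: scalars in the top row of a column (rest $0$), arrays of length $K-1$ in rows $2,\dots,K$ (top $0$); designated columns $B_{\mathrm{global}}$ (top $1$, rest $0$), $B_{\mathrm{local}}$ (top $0$, rest $1$), positional columns $P_1,P_2$ (array position $i$ holds $p_i^{(1)},p_i^{(2)}$), and scratchpad columns. ''Simulating an operation'' means the layer's weights can be chosen so that applying it to $X$ performs the stated update. *)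

(* Defs.v *)
From HB Require Import structures.
From mathcomp Require Import all_boot all_order all_algebra.
Set Implicit Arguments. Unset Strict Implicit. Unset Printing Implicit Defensive.
Import Order.TTheory GRing.Theory Num.Theory.
Local Open Scope ring_scope.

Section Transformer.
Variable R : realFieldType.

Definition relu_mx m n (A : 'M[R]_(m, n)) : 'M[R]_(m, n) :=
  map_mx (fun x => Num.max x 0) A.

Definition argmax_set n (Phi : 'M[R]_n) (i : 'I_n) : {set 'I_n} :=
  [set k | [forall j, Phi i j <= Phi i k]].

Definition hardmax n (Phi : 'M[R]_n) : 'M[R]_n :=
  \matrix_(i, k) (if k \in argmax_set Phi i then (#|argmax_set Phi i|%:R)^-1 else 0).

Record head (d : nat) := Head {
  WQ : 'M[R]_(d, 2); WK : 'M[R]_(d, 2); WV : 'M[R]_(d, d) }.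

Definition psi n d (h : head d) (X : 'M[R]_(n, d)) (B : 'M[R]_n) : 'M[R]_(n, d) :=
  B *m hardmax (X *m WQ h *m (WK h)^T *m X^T) *m X *m WV h.

Record mlp (d : nat) := Mlp {
  d1 : nat; d2 : nat; d3 : nat;
  W1 : 'M[R]_(d, d1); W2 : 'M[R]_(d1, d2); W3 : 'M[R]_(d2, d3); W4 : 'M[R]_(d3, d) }.

Definition f_mlp n d (m : mlp d) (X : 'M[R]_(n, d)) : 'M[R]_(n, d) :=
  relu_mx (relu_mx (relu_mx (X *m W1 m) *m W2 m) *m W3 m) *m W4 m + X.

Record layer (d : nat) := Layer {
  headsA : seq (head d); headsAT : seq (head d); headsI : seq (head d);
  lmlp : mlp d }.

Definition f_attn n d (L : layer d) (X : 'M[R]_(n, d)) (A : 'M[R]_n) : 'M[R]_(n, d) :=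
  \sum_(h <- headsA L) psi h X A + \sum_(h <- headsAT L) psi h X A^T
  + \sum_(h <- headsI L) psi h X 1%:M + X.

Definition f_layer n d (L : layer d) (X : 'M[R]_(n, d)) (A : 'M[R]_n) : 'M[R]_(n, d) :=
  f_mlp (lmlp L) (f_attn L X A).

End Transformer.

(* Matrices have K.+1 rows; row ord0 is the paper's row 1 (the "top" row),
   rows i <> ord0 are the paper's rows 2..K. *)

Definition padded (R : realFieldType) K (A : 'M[R]_K.+1) : Prop :=
  (forall j, A ord0 j = 0) /\ (forall i, A i ord0 = 0).

Definition termination_update (R : realFieldType) K d (C E : 'I_d)
  (X : 'M[R]_(K.+1, d)) : 'M[R]_(K.+1, d) :=
  \matrix_(i, j)
    (if (i == ord0) && (j == E) then
       (if [forall k : 'I_K.+1, (k != ord0) ==> (X k C != 0)] then 1 else 0)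
     else X i j).

(* Main.v *)
Require Import Defs.
From HB Require Import structures.
From mathcomp Require Import all_boot all_order all_algebra.
From mathcomp Require Import lra.
Import Order.TTheory GRing.Theory Num.Theory.
Local Open Scope ring_scope.
Set Implicit Arguments. Unset Strict Implicit. Unset Printing Implicit Defensive.

Section H.
Variable R : realFieldType.

Lemma hardmax_avg n (Phi : 'M[R]_n) i (v : 'I_n -> R) c k0 :
  (forall j, Phi i j <= Phi i k0) ->
  (forall k, (forall j, Phi i j <= Phi i k) -> v k = c) ->
  \sum_k hardmax Phi i k * v k = c.
Proof.
move=> Hk0 Hv.
set S := argmax_set Phi i.
have k0S : k0 \in S by rewrite inE; apply/forallP.
have HS : forall k, k \in S -> v k = c by move=> k; rewrite inE => /forallP; apply: Hv.
rewrite (eq_bigr (fun k => if k \in S then (#|S|%:R)^-1 * c else 0)); last first.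
  move=> k _; rewrite mxE -/S; case: ifP => kS; last by rewrite mul0r.
  by rewrite HS.
rewrite -big_mkcond /= sumr_const.
have -> : forall x : R, x *+ #|S| = x * #|S|%:R by move=> x; rewrite mulr_natr.
rewrite mulrAC mulVf ?mul1r //.
by rewrite pnatr_eq0 -lt0n; apply/card_gt0P; exists k0.
Qed.

Definition mk2 d (f g : 'I_d -> R) : 'M[R]_(d,2) :=
  \matrix_(j, t) (if t == ord0 then f j else g j).
Definition lin n d (X : 'M[R]_(n,d)) i (f : 'I_d -> R) := \sum_j X i j * f j.
Definition dl d (a : 'I_d) := fun j : 'I_d => ((j == a)%:R : R).
Definition df d (a b : 'I_d) := fun j : 'I_d => ((j == a)%:R - (j == b)%:R : R).
Definition WVm d (E : 'I_d) (w : 'I_d -> R) : 'M[R]_d :=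
  \matrix_(j, j') (if j' == E then w j else 0).

Lemma phiE n d (X : 'M[R]_(n,d)) f g f' g' i k :
  (X *m mk2 f g *m (mk2 f' g')^T *m X^T) i k =
  lin X i f * lin X k f' + lin X i g * lin X k g'.
Proof.
rewrite -mulmxA -trmx_mul mxE big_ord_recr big_ord1 /= !mxE /lin.
by congr (_ * _ + _ * _); apply: eq_bigr => j _; rewrite !mxE.
Qed.

Lemma lin_dl n d (X : 'M[R]_(n,d)) i a : lin X i (dl a) = X i a.
Proof.
rewrite /lin (bigD1 a) //= big1 /dl ?eqxx ?mulr1 ?addr0 // => j /negbTE ->.
by rewrite mulr0.
Qed.

Lemma lin_df n d (X : 'M[R]_(n,d)) i a b : lin X i (df a b) = X i a - X i b.
Proof.
rewrite -!lin_dl /lin -sumrB; apply: eq_bigr => j _; by rewrite /df mulrBr.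
Qed.

Lemma WVE n d (X : 'M[R]_(n,d)) E w k j :
  (X *m WVm E w) k j = if j == E then lin X k w else 0.
Proof.
rewrite mxE /lin; case: (boolP (j == E)) => [/eqP->|nE].
  by apply: eq_bigr => l _; rewrite mxE eqxx.
by rewrite big1 // => l _; rewrite mxE (negbTE nE) mulr0.
Qed.

Lemma psiE n (dd : nat) (h : Defs.head R dd) (X : 'M[R]_(n,dd)) i j :
  psi h X 1%:M i j =
  \sum_k hardmax (X *m WQ h *m (WK h)^T *m X^T) i k * (X *m WV h) k j.
Proof. by rewrite /psi mul1mx -mulmxA mxE. Qed.

Lemma addE m n (A B : 'M[R]_(m,n)) i j : (A + B) i j = A i j + B i j.
Proof. by rewrite mxE. Qed.

End H.

Unset Implicit Arguments.
Theorem lemmaC6 (R : realFieldType) (d : nat) (Omega : R)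
  (Bglobal Blocal C E : 'I_d) :
  0 < Omega ->
  uniq [:: Bglobal; Blocal; C; E] ->
  exists L : layer R d,
    forall (K : nat) (X : 'M[R]_(K.+1, d)) (A : 'M[R]_K.+1),
      padded A ->
      (forall i j, `|X i j| <= Omega) ->
      (forall i, X i Bglobal = (i == ord0)%:R) ->
      (forall i, X i Blocal = (i != ord0)%:R) ->
      X ord0 C = 0 ->
      (forall i, i != ord0 -> X i C = 0 \/ X i C = 1) ->
      (forall i, i != ord0 -> X i E = 0) ->
      f_layer L X A = termination_update C E X.
Proof.
move=> _ _.
pose h1 := Head (mk2 (@dl R _ Bglobal) (@dl R _ Blocal)) (mk2 (@df R _ Blocal C) (@dl R _ Bglobal))
  (WVm E (@df R _ C Blocal)).
pose h2 := Head (mk2 (@dl R _ Bglobal) (@dl R _ Blocal)) (mk2 (@dl R _ Bglobal) (@dl R _ Blocal))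
  (WVm E (@df R _ Bglobal E)).
pose m := @Mlp R d 0 0 0 0 0 0 0.
exists (Layer [::] [::] [:: h1; h2] m).
move=> K X A _ _ Hg Hl HC0 HC HE.
rewrite /f_layer /f_mlp /= mulmx0 add0r /f_attn /= !big_nil !big_cons big_nil.
rewrite !addr0 !add0r.
apply/matrixP => i j.
rewrite !addE !psiE /termination_update mxE.
under eq_bigr do rewrite WVE.
under [X in _ + X + _]eq_bigr do rewrite WVE.
case: (boolP (j == E)) => [/eqP -> | nE]; last first.
  by rewrite andbF !big1 ?add0r // => k _; rewrite mulr0.
rewrite andbT.
under eq_bigr do rewrite lin_df.
under [X in _ + X + _]eq_bigr do rewrite lin_df.
have PE1 : forall l k, (X *m mk2 (dl R Bglobal) (dl R Blocal) *m (mk2 (df R Blocal C) (dl R Bglobal))^T *m X^T) l k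
   = (l == ord0)%:R * ((k != ord0)%:R - X k C) + (l != ord0)%:R * (k == ord0)%:R.
  by move=> l k; rewrite phiE !lin_dl lin_df !Hg !Hl.
have PE2 : forall l k, (X *m mk2 (dl R Bglobal) (dl R Blocal) *m (mk2 (dl R Bglobal) (dl R Blocal))^T *m X^T) l k
   = (l == ord0)%:R * (k == ord0)%:R + (l != ord0)%:R * (k != ord0)%:R.
  by move=> l k; rewrite phiE !lin_dl !Hg !Hl.
have HC' : forall k, k != ord0 -> X k C != 0 -> X k C = 1.
  by move=> k nk; case: (HC k nk) => ->; rewrite ?eqxx.
have Bg0 : X ord0 Bglobal = 1 by rewrite Hg eqxx.
have Bl0 : X ord0 Blocal = 0 by rewrite Hl eqxx.
have BgN : forall k, k != ord0 -> X k Bglobal = 0 by move=> k nk; rewrite Hg (negbTE nk).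
have BlN : forall k, k != ord0 -> X k Blocal = 1 by move=> k nk; rewrite Hl nk.
case: (boolP (i == ord0)) => [/eqP -> | ni]; last first.
  rewrite (hardmax_avg (c:=0) (k0:=ord0)); first last.
  - move=> k; move/(_ ord0); rewrite !PE1 (negbTE ni) eqxx /=.
    case: (boolP (k == ord0)) => [/eqP -> _|nk]; first by rewrite HC0 Bl0 subr0.
    by rewrite /=; lra.
  - move=> l; rewrite !PE1 (negbTE ni) eqxx /=.
    by case: (l == ord0) => /=; lra.
  rewrite (hardmax_avg (c:=0) (k0:=i)); first last.
  - move=> k; move/(_ i); rewrite !PE2 (negbTE ni) /=.
    case: (boolP (k == ord0)) => [/eqP -> | nk]; first by rewrite /=; lra.
    by rewrite BgN // HE // subr0.
  - move=> l; rewrite !PE2 (negbTE ni) /=.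
    by case: (l != ord0) => /=; lra.
  by rewrite !add0r.
rewrite ?eqxx.
rewrite (hardmax_avg (R:=R) (Phi := X *m mk2 (dl R Bglobal) (dl R Blocal) *m (mk2 (dl R Bglobal) (dl R Blocal))^T *m X^T) (c:=1 - X ord0 E) (k0:=ord0)); first last.
- move=> k; move/(_ ord0); rewrite !PE2 eqxx /=.
  case: (boolP (k == ord0)) => [/eqP -> | nk]; first by rewrite Bg0.
  by rewrite /=; lra.
- move=> l; rewrite !PE2 eqxx /=.
  by case: (l == ord0) => /=; lra.
case: (boolP [forall k, (k != ord0) ==> (X k C != 0)]) => [/forallP F | /forallPn [k1]].
  rewrite (hardmax_avg (c:=0) (k0:=ord0)); first lra; first last.
  - move=> k _.
    case: (boolP (k == ord0)) => [/eqP -> | nk]; first by rewrite HC0 Bl0 subr0.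
    by rewrite BlN // HC' // ?subrr //; move/implyP: (F k); apply.
  - move=> l; rewrite !PE1 eqxx /=.
    case: (boolP (l == ord0)) => [/eqP -> | nl]; first by rewrite HC0 /=; lra.
    rewrite HC' //= ?HC0; [lra | by move/implyP: (F l); apply].
rewrite negb_imply negbK => /andP [nk1 /eqP Ck1].
rewrite (hardmax_avg (c:=-1) (k0:=k1)); first lra; first last.
- move=> k; move/(_ k1); rewrite !PE1 eqxx /= nk1 Ck1.
  case: (boolP (k == ord0)) => [/eqP -> | nk]; first by rewrite HC0 /=; lra.
  rewrite ?BlN //; case: (HC k nk) => -> /=; lra.
- move=> l; rewrite !PE1 eqxx /= nk1 Ck1.
  case: (boolP (l == ord0)) => [/eqP -> | nl]; first by rewrite HC0 /=; lra.
  by case: (HC l nl) => -> /=; lra.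
Qed.
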